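(* Assume (A1), (A2) and (A3). Then for Method (BCV): (i) the number of changes of the inner index $k$ at each stage $l$ is finite (so the sequence $\{z^l\}_{l\ge0}$ is well defined); (ii) the sequence $\{z^l\}$ has limit points, and every limit point $\bar z$ belongs to $D$ and solves the variational inequality: there exists $\bar g\in\partial^{\uparrow}f(\bar z)$ with $\langle\bar g,x-\bar z\rangle\ge0$ for all $x\in D$; (iii) if in addition $f$ is semi-convex on $X$, then $\lim_{l\to\infty}f(z^l)=f^*$ and every limit point of $\{z^l\}$ belongs to $D^*$.
   Context: Setting: limit problem $\min_{x\in D}f(x)$ with $D=\{x\in X:\langle a,x\rangle=\beta\}$, $X=\prod_{i=1}^n[\alpha'_i,\alpha''_i]$; $f^*=\inf_{x\in D}f(x)$ and $D^*$ is its solution set. Approximating problems $\min_{x\in D_l}f_l(x)$, $l=0,1,2,\dots$, with $D_l=\{x\in X_l:\langle a^l,x\rangle=\beta_l\}$, $X_l=\prod_{i=1}^n[\alpha'_{il},\alpha''_{il}]$, $a^l=(a_{1l},\dots,a_{nl})^\top$. (A1): $D\ne\varnothing$, $X$ bounded, $a_i>0$ for all $i\in I=\{1,\dots,n\}$, and $f:\mathbb{R}^n\to\mathbb{R}$ is Lipschitz continuous in a neighborhood of every point of $X$. (A2): for each $l$, $D_l\neq\varnothing$, $a_{il}>0$ and $-\infty<\alpha'_{il}<\alpha''_{il}<+\infty$ for all $i$; and $\alpha'_{il}\to\alpha'_i$, $\alpha''_{il}\to\alpha''_i$, $a^l\to a$, $\beta_l\to\beta$ as $l\to\infty$. (A3):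 each $f_l$ is continuously differentiable on (a neighborhood of) $X_l$, and whenever $y^l\in D_l$ and $y^l\to\bar y$, the gradients satisfy $\nabla f_l(y^l)\to\bar g$ for some $\bar g\in\partial^{\uparrow}f(\bar y)$. Clarke notions: $f^{\uparrow}(x;p)=\limsup_{y\to x,\ \alpha\searrow0}(f(y+\alpha p)-f(y))/\alpha$ and $\partial^{\uparrow}f(x)=\{g:\langle g,p\rangle\le f^{\uparrow}(x;p)\ \forall p\}$. $f$ is semi-convex on $X$ if for all $x,y\in X$, $f^{\uparrow}(x;y-x)\ge0$ implies $f(y)\ge f(x)$. Notation: $g_{il}(x)=\partial f_l(x)/\partial x_i$, $h_{il}(x)=g_{il}(x)/a_{il}$; given positive sequence $\{\varepsilon_l\}$, $I_l^-(x)=\{i\in I: x_i\ge\alpha'_{il}+\varepsilon_l/a_{il}\}$, $I_l^+(x)=\{i\in I: x_i\le\alpha''_{il}-\varepsilon_l/a_{il}\}$; $\pi_V$ is Euclidean projection onto $V$. Method (BCV): choose $z^0\in D_0$, $\sigma\in(0,1)$, $\theta\in(0,1)$, positive sequences $\delta_l\searrow0$, $\varepsilon_l\searrow0$; set $l=1$. Stage $l$: set $k=0$, $x^0=\pi_{D_l}(z^{l-1})$. Step 1: if there exist $i\in I_l^-(x^k)$, $j\in I_l^+(x^k)$ with $h_{il}(x^k)-h_{jl}(x^k)\ge\delta_l$, choose any such pair, set $i_k=i$, $j_k=j$, $\gamma_k=\min\{a_{il}(x^k_i-\alpha'_{il}),\,a_{jl}(\alpha''_{jl}-x^k_j)\}$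 and go to Step 2; otherwise set $z^l=x^k$, $l:=l+1$ and start the next stage. Step 2: define $d^k$ by $d^k_i=-1/a_{il}$, $d^k_j=1/a_{jl}$, $d^k_s=0$ for $s\ne i,j$; let $m$ be the smallest nonnegative integer with $f_l(x^k+\theta^m\gamma_kd^k)\le f_l(x^k)+\sigma\theta^m\gamma_k\langle\nabla f_l(x^k),d^k\rangle$; set $\lambda_k=\theta^m\gamma_k$, $x^{k+1}=x^k+\lambda_kd^k$, $k:=k+1$, and return to Step 1. *)

(* Defs.v *)
(* classical reals. Vectors of R^n are represented as
   functions nat -> R of which only the coordinates 0..n-1 matter
   (all norms, inner products, boxes and limits only look at i < n). *)
From Stdlib Require Import Reals Lra Lia Relations.
Open Scope R_scope.

Definition vec := nat -> R.

Fixpoint sumR (n : nat) (u : nat -> R) : R :=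
  match n with O => 0 | S m => sumR m u + u m end.

Definition dot (n : nat) (u v : vec) : R := sumR n (fun i => u i * v i).
Definition vadd (u v : vec) : vec := fun i => u i + v i.
Definition vsub (u v : vec) : vec := fun i => u i - v i.
Definition vscal (c : R) (u : vec) : vec := fun i => c * u i.
Definition norm (n : nat) (u : vec) : R := sqrt (sumR n (fun i => u i ^ 2)).
Definition dist (n : nat) (u v : vec) : R := norm n (vsub u v).

Definition inbox (n : nat) (lo hi : vec) (x : vec) : Prop :=
  forall i, (i < n)%nat -> lo i <= x i <= hi i.

Definition feas (n : nat) (lo hi a : vec) (b : R) (x : vec) : Prop :=
  inbox n lo hi x /\ dot n a x = b.

Definition loc_lipschitz (n : nat) (f : vec -> R) (x : vec) : Prop :=
  exists L r, 0 < r /\ forall y z, dist n y x < r -> dist n z x < r ->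
    Rabs (f y - f z) <= L * dist n y z.

(* c <= f^(x;p) = limsup_{y -> x, t \searrow 0} (f(y+tp) - f y)/t  (literally) *)
Definition clarke_ge (n : nat) (f : vec -> R) (x p : vec) (c : R) : Prop :=
  forall e, 0 < e -> forall r, 0 < r -> exists y t,
    dist n y x < r /\ 0 < t < r /\ c - e <= (f (vadd y (vscal t p)) - f y) / t.

Definition clarke_subdiff (n : nat) (f : vec -> R) (x g : vec) : Prop :=
  forall p, clarke_ge n f x p (dot n g p).

Definition semiconvex_on (n : nat) (f : vec -> R) (lo hi : vec) : Prop :=
  forall x y, inbox n lo hi x -> inbox n lo hi y ->
    clarke_ge n f x (vsub y x) 0 -> f x <= f y.

Definition frechet (n : nat) (F : vec -> R) (x g : vec) : Prop :=
  forall e, 0 < e -> exists r, 0 < r /\ forall h, norm n h < r ->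
    Rabs (F (vadd x h) - F x - dot n g h) <= e * norm n h.

Definition vcont_at (n : nat) (G : vec -> vec) (x : vec) : Prop :=
  forall e, 0 < e -> exists r, 0 < r /\ forall y, dist n y x < r ->
    dist n (G y) (G x) < e.

Definition C1_near_box (n : nat) (F : vec -> R) (G : vec -> vec) (lo hi : vec) : Prop :=
  exists r, 0 < r /\ forall x0 y, inbox n lo hi x0 -> dist n y x0 < r ->
    frechet n F y (G y) /\ vcont_at n G y.

Definition vcv (n : nat) (u : nat -> vec) (v : vec) : Prop :=
  forall e, 0 < e -> exists N, forall k, (N <= k)%nat -> dist n (u k) v < e.

Definition cluster (n : nat) (u : nat -> vec) (v : vec) : Prop :=
  forall e, 0 < e -> forall N, exists k, (N <= k)%nat /\ dist n (u k) v < e.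

Definition is_proj (n : nat) (S : vec -> Prop) (y p : vec) : Prop :=
  S p /\ forall q, S q -> dist n y p <= dist n y q.

Definition is_inf_on (f : vec -> R) (S : vec -> Prop) (m : R) : Prop :=
  (forall x, S x -> m <= f x) /\
  (forall e, 0 < e -> exists x, S x /\ f x < m + e).

(* Data of the approximating problems: lol l = alpha'_{.l}, hil l = alpha''_{.l},
   al l = a^l, betal l = beta_l, fl l = f_l, gf l = grad f_l. *)

Definition hq (gf : nat -> vec -> vec) (al : nat -> vec) (l : nat) (x : vec) (i : nat) : R :=
  gf l x i / al l i.

Definition Iminus (n : nat) (lol al : nat -> vec) (eps : nat -> R) (l : nat) (x : vec) (i : nat) : Prop :=
  (i < n)%nat /\ lol l i + eps l / al l i <= x i.

Definition Iplus (n : nat) (hil al : nat -> vec) (eps : nat -> R) (l : nat) (x : vec) (j : nat) : Prop :=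
  (j < n)%nat /\ x j <= hil l j - eps l / al l j.

Definition eligible (n : nat) (lol hil al : nat -> vec) (gf : nat -> vec -> vec)
  (dlt eps : nat -> R) (l : nat) (x : vec) (i j : nat) : Prop :=
  Iminus n lol al eps l x i /\ Iplus n hil al eps l x j /\
  hq gf al l x i - hq gf al l x j >= dlt l.

Definition dir (al : nat -> vec) (l i j : nat) : vec :=
  fun s => if Nat.eqb s i then - / al l i
           else if Nat.eqb s j then / al l j else 0.

Definition gam (lol hil al : nat -> vec) (l : nat) (x : vec) (i j : nat) : R :=
  Rmin (al l i * (x i - lol l i)) (al l j * (hil l j - x j)).

Definition armijo (n : nat) (al : nat -> vec) (fl : nat -> vec -> R) (gf : nat -> vec -> vec)
  (sigma : R) (l : nat) (x : vec) (i j : nat) (lam : R) : Prop :=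
  fl l (vadd x (vscal lam (dir al l i j)))
    <= fl l x + sigma * lam * dot n (gf l x) (dir al l i j).

(* one pass Step 1 -> Step 2 (k -> k+1) of stage l *)
Definition bcv_step (n : nat) (lol hil al : nat -> vec) (fl : nat -> vec -> R)
  (gf : nat -> vec -> vec) (sigma theta : R) (dlt eps : nat -> R) (l : nat)
  (x x' : vec) : Prop :=
  exists i j, eligible n lol hil al gf dlt eps l x i j /\
    exists m : nat,
      armijo n al fl gf sigma l x i j (theta ^ m * gam lol hil al l x i j) /\
      (forall m', (m' < m)%nat ->
         ~ armijo n al fl gf sigma l x i j (theta ^ m' * gam lol hil al l x i j)) /\
      x' = vadd x (vscal (theta ^ m * gam lol hil al l x i j) (dir al l i j)).

Definition bcv_stop (n : nat) (lol hil al : nat -> vec) (gf : nat -> vec -> vec)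
  (dlt eps : nat -> R) (l : nat) (x : vec) : Prop :=
  ~ exists i j, eligible n lol hil al gf dlt eps l x i j.

(* the whole stage l: from z = z^{l-1} to z' = z^l *)
Definition bcv_stage (n : nat) (lol hil al : nat -> vec) (betal : nat -> R)
  (fl : nat -> vec -> R) (gf : nat -> vec -> vec) (sigma theta : R)
  (dlt eps : nat -> R) (l : nat) (z z' : vec) : Prop :=
  exists x0, is_proj n (feas n (lol l) (hil l) (al l) (betal l)) z x0 /\
    clos_refl_trans vec (bcv_step n lol hil al fl gf sigma theta dlt eps l) x0 z' /\
    bcv_stop n lol hil al gf dlt eps l z'.

(* z is a possible value of z^l produced by the method started at z0 *)
Inductive bcv_gen (n : nat) (lol hil al : nat -> vec) (betal : nat -> R)
  (fl : nat -> vec -> R) (gf : nat -> vec -> vec) (sigma theta : R)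
  (dlt eps : nat -> R) (z0 : vec) : nat -> vec -> Prop :=
| bcv_gen0 : bcv_gen n lol hil al betal fl gf sigma theta dlt eps z0 O z0
| bcv_genS : forall l z z',
    bcv_gen n lol hil al betal fl gf sigma theta dlt eps z0 l z ->
    bcv_stage n lol hil al betal fl gf sigma theta dlt eps (S l) z z' ->
    bcv_gen n lol hil al betal fl gf sigma theta dlt eps z0 (S l) z'.

(* Main.v *)
From Pilot Require Import Defs.
From Stdlib Require Import Reals Relations.
From Stdlib Require Import Lra Lia Classical ClassicalEpsilon FunctionalExtensionality.
Open Scope R_scope.
Import Pilot.Defs.


Lemma sumR_ext n u v : (forall i, (i < n)%nat -> u i = v i) -> sumR n u = sumR n v.
Proof. induction n; simpl; intros H; auto. rewrite IHn by (intros; apply H; lia). rewrite (H n) by lia. auto. Qed.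

Lemma sumR_plus n u v : sumR n (fun i => u i + v i) = sumR n u + sumR n v.
Proof. induction n; simpl; [lra|]. rewrite IHn. lra. Qed.

Lemma sumR_scal n c u : sumR n (fun i => c * u i) = c * sumR n u.
Proof. induction n; simpl; [lra|]. rewrite IHn. lra. Qed.

Lemma sumR_minus n u v : sumR n (fun i => u i - v i) = sumR n u - sumR n v.
Proof. induction n; simpl; [lra|]. rewrite IHn. lra. Qed.

Lemma sumR_le n u v : (forall i, (i < n)%nat -> u i <= v i) -> sumR n u <= sumR n v.
Proof. induction n; simpl; intros H; [lra|]. pose proof (H n ltac:(lia)). pose proof (IHn ltac:(intros; apply H; lia)). lra. Qed.

Lemma sumR_nonneg n u : (forall i, (i < n)%nat -> 0 <= u i) -> 0 <= sumR n u.
Proof. intros H. replace 0 with (sumR n (fun _ => 0)). apply sumR_le; auto.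
 induction n; simpl; auto. rewrite IHn; [lra|]. intros; apply H; lia. Qed.

Lemma sumR_zero n u : (forall i, (i < n)%nat -> u i = 0) -> sumR n u = 0.
Proof. induction n; simpl; intros H; auto. rewrite IHn by (intros; apply H; lia). rewrite H by lia. lra. Qed.

Lemma sumR_term_le n u i : (forall i, (i < n)%nat -> 0 <= u i) -> (i < n)%nat -> u i <= sumR n u.
Proof. induction n; simpl; intros H Hi; [lia|].
 destruct (Nat.eq_dec i n) as [->|Hne].
 - pose proof (sumR_nonneg n u ltac:(intros; apply H; lia)). lra.
 - pose proof (IHn ltac:(intros; apply H; lia) ltac:(lia)). pose proof (H n ltac:(lia)). lra. Qed.

Lemma sumR_abs n u : Rabs (sumR n u) <= sumR n (fun i => Rabs (u i)).
Proof. induction n; simpl. rewrite Rabs_R0; lra.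
 pose proof (Rabs_triang (sumR n u) (u n)). lra. Qed.

Lemma sumR_two n u i j : (i < n)%nat -> (j < n)%nat -> i <> j ->
  (forall s, (s < n)%nat -> s <> i -> s <> j -> u s = 0) -> sumR n u = u i + u j.
Proof. induction n; simpl; intros Hi Hj Hij H; [lia|].
 destruct (Nat.eq_dec i n) as [->|Hi'].
 - rewrite (sumR_ext n u (fun s => if Nat.eq_dec s j then u j else 0)).
   2:{ intros s Hs. destruct (Nat.eq_dec s j); subst; auto. apply H; lia. }
   assert (forall m, (j < m)%nat -> sumR m (fun s => if Nat.eq_dec s j then u j else 0) = u j) as Hs.
   { induction m; simpl; intros; [lia|]. destruct (Nat.eq_dec m j).
     + subst. rewrite sumR_zero. lra. intros s Hs'. match goal with |- context[Nat.eq_dec s ?x] => destruct (Nat.eq_dec s x) end; [lia|auto].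
     + rewrite IHm by lia. lra. }
   rewrite Hs by lia. lra.
 - destruct (Nat.eq_dec j n) as [->|Hj'].
   + rewrite (sumR_ext n u (fun s => if Nat.eq_dec s i then u i else 0)).
     2:{ intros s Hs. destruct (Nat.eq_dec s i); subst; auto. apply H; lia. }
     assert (forall m, (i < m)%nat -> sumR m (fun s => if Nat.eq_dec s i then u i else 0) = u i) as Hs.
     { induction m; simpl; intros; [lia|]. destruct (Nat.eq_dec m i).
       + subst. rewrite sumR_zero. lra. intros s Hs'. match goal with |- context[Nat.eq_dec s ?x] => destruct (Nat.eq_dec s x) end; [lia|auto].
       + rewrite IHm by lia. lra. }
     rewrite Hs by lia. lra.
   + rewrite IHn by (auto; try lia; intros; apply H; lia). rewrite (H n) by lia. lra. Qed.

Lemma sumR_cv n (u : nat -> nat -> R) c :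
  (forall i, (i < n)%nat -> Un_cv (fun k => u k i) (c i)) ->
  Un_cv (fun k => sumR n (u k)) (sumR n c).
Proof. induction n; simpl; intros H.
 - intros e He. exists O. intros. unfold Rdist. rewrite Rminus_diag, Rabs_R0. auto.
 - apply CV_plus. apply IHn. intros; apply H; lia. apply H; lia. Qed.

Lemma sumsq_nonneg n u : 0 <= sumR n (fun i => u i ^ 2).
Proof. apply sumR_nonneg. intros. nra. Qed.

Lemma norm_nonneg n u : 0 <= norm n u.
Proof. apply sqrt_pos. Qed.

Lemma norm_ext n u v : (forall i, (i < n)%nat -> u i = v i) -> norm n u = norm n v.
Proof. intros H. unfold norm. f_equal. apply sumR_ext. intros; rewrite H; auto. Qed.

Lemma coord_le_norm n u i : (i < n)%nat -> Rabs (u i) <= norm n u.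
Proof. intros Hi. unfold norm. rewrite <- sqrt_Rsqr_abs. apply sqrt_le_1_alt.
 unfold Rsqr. replace (u i * u i) with ((fun k => u k ^ 2) i) by (simpl; ring).
 apply (sumR_term_le n (fun k => u k ^ 2)); auto. intros; nra. Qed.

Lemma norm_le_N1 n u : norm n u <= sumR n (fun i => Rabs (u i)).
Proof. unfold norm. assert (H0 : 0 <= sumR n (fun i => Rabs (u i))) by (apply sumR_nonneg; intros; apply Rabs_pos).
 rewrite <- (sqrt_Rsqr (sumR n (fun i => Rabs (u i)))) by auto. apply sqrt_le_1_alt.
 unfold Rsqr. induction n; cbn [sumR]. lra.
 assert (0 <= sumR n (fun i => Rabs (u i))) by (apply sumR_nonneg; intros; apply Rabs_pos).
 specialize (IHn H). pose proof (Rabs_pos (u n)). pose proof (pow2_abs (u n)).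
 set (S0 := sumR n (fun i => Rabs (u i))) in *. set (a0 := Rabs (u n)) in *.
 assert (0 <= S0 * a0) by (apply Rmult_le_pos; auto).
 replace ((S0 + a0) * (S0 + a0)) with (S0 * S0 + 2 * (S0 * a0) + a0 ^ 2) by ring. lra. Qed.

Lemma norm_scal n c u : norm n (vscal c u) = Rabs c * norm n u.
Proof. unfold norm, vscal. rewrite (sumR_ext n _ (fun i => c^2 * u i ^ 2)) by (intros; ring).
 rewrite sumR_scal. rewrite sqrt_mult by (nra || apply sumsq_nonneg).
 f_equal. rewrite <- sqrt_Rsqr_abs. unfold Rsqr. f_equal. ring. Qed.

Lemma CS n u v : Rabs (dot n u v) <= norm n u * norm n v.
Proof.
 set (A := sumR n (fun i => u i ^ 2)). set (B := dot n u v). set (C := sumR n (fun i => v i ^ 2)).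
 assert (Hq : forall t, 0 <= A + 2 * t * B + t ^ 2 * C).
 { intros t. assert (0 <= sumR n (fun i => (u i + t * v i) ^ 2)) by apply sumsq_nonneg.
   rewrite (sumR_ext n _ (fun i => u i ^ 2 + ((2 * t) * (u i * v i) + t ^ 2 * v i ^ 2))) in H by (intros; ring).
   rewrite !sumR_plus, !sumR_scal in H. unfold A, B, C, dot. lra. }
 assert (HA : 0 <= A) by apply sumsq_nonneg. assert (HC : 0 <= C) by apply sumsq_nonneg.
 assert (HB : B * B <= A * C).
 { destruct (Req_dec C 0) as [HC0|HC0].
   - destruct (Req_dec B 0) as [HB0|HB0]. rewrite HB0, HC0. lra.
     specialize (Hq (- (A + 1) / (2 * B))). rewrite HC0 in Hq.
     replace (A + 2 * (- (A + 1) / (2 * B)) * B + (- (A + 1) / (2 * B)) ^ 2 * 0) with (-1) in Hq by (field; auto). lra.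
   - specialize (Hq (- B / C)).
     replace (A + 2 * (- B / C) * B + (- B / C) ^ 2 * C) with ((A * C - B * B) / C) in Hq by (field; auto).
     assert (0 < C) by lra. apply Rmult_le_compat_r with (r := C) in Hq; [|lra].
     unfold Rdiv in Hq. rewrite Rmult_assoc, Rinv_l in Hq by lra. lra. }
 unfold norm. fold A C. rewrite <- sqrt_mult by auto. rewrite <- sqrt_Rsqr_abs. apply sqrt_le_1_alt. unfold Rsqr. lra.
Qed.

Lemma norm_sq n u : norm n u ^ 2 = sumR n (fun i => u i ^ 2).
Proof. unfold norm. apply pow2_sqrt, sumsq_nonneg. Qed.

Lemma norm_tri n u v : norm n (vadd u v) <= norm n u + norm n v.
Proof.
 assert (H : norm n (vadd u v) ^ 2 <= (norm n u + norm n v) ^ 2).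
 { rewrite norm_sq.
   replace ((norm n u + norm n v) ^ 2) with (norm n u ^ 2 + 2 * (norm n u * norm n v) + norm n v ^ 2) by ring.
   rewrite !norm_sq.
   unfold vadd. rewrite (sumR_ext n _ (fun i => u i ^ 2 + (2 * (u i * v i) + v i ^ 2))) by (intros; ring).
   rewrite !sumR_plus, sumR_scal. pose proof (CS n u v). pose proof (Rle_abs (dot n u v)). unfold dot in *. lra. }
 pose proof (norm_nonneg n (vadd u v)). pose proof (norm_nonneg n u). pose proof (norm_nonneg n v). nra. Qed.

Lemma dist_tri n u v w : dist n u w <= dist n u v + dist n v w.
Proof. unfold dist. rewrite (norm_ext n (vsub u w) (vadd (vsub u v) (vsub v w))) by (intros; unfold vsub, vadd; ring).
 apply norm_tri. Qed.

Lemma dist_sym n u v : dist n u v = dist n v u.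
Proof. unfold dist. rewrite (norm_ext n (vsub u v) (vscal (-1) (vsub v u))) by (intros; unfold vsub, vscal; ring).
 rewrite norm_scal. replace (Rabs (-1)) with 1 by (rewrite Rabs_left; lra). ring. Qed.

Lemma dist_nonneg n u v : 0 <= dist n u v.
Proof. apply norm_nonneg. Qed.

Lemma dist_refl n u : dist n u u = 0.
Proof. unfold dist, norm. rewrite sumR_zero. apply sqrt_0. intros; unfold vsub; ring. Qed.

Lemma coord_le_dist n u v i : (i < n)%nat -> Rabs (u i - v i) <= dist n u v.
Proof. intros; apply (coord_le_norm n (vsub u v) i); auto. Qed.

Lemma vcv_comp n u v : (forall i, (i < n)%nat -> Un_cv (fun k => u k i) (v i)) -> vcv n u v.
Proof. intros H.
 assert (Hs : Un_cv (fun k => sumR n (fun i => Rabs (u k i - v i))) (sumR n (fun _ => 0))).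
 { apply sumR_cv. intros i Hi e He. destruct (H i Hi e He) as [N HN]. exists N. intros k Hk.
   specialize (HN k Hk). unfold Rdist in *. rewrite Rminus_0_r, Rabs_Rabsolu. auto. }
 rewrite sumR_zero in Hs by auto.
 intros e He. destruct (Hs e He) as [N HN]. exists N. intros k Hk. specialize (HN k Hk).
 unfold Rdist in HN. rewrite Rminus_0_r in HN.
 pose proof (norm_le_N1 n (vsub (u k) v)). unfold dist. unfold vsub in *.
 pose proof (Rle_abs (sumR n (fun i => Rabs (u k i - v i)))). lra. Qed.

Lemma vcv_coord n u v i : vcv n u v -> (i < n)%nat -> Un_cv (fun k => u k i) (v i).
Proof. intros H Hi e He. destruct (H e He) as [N HN]. exists N. intros k Hk.
 specialize (HN k Hk). unfold Rdist. pose proof (coord_le_dist n (u k) v i Hi). lra. Qed.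

Definition strict (phi : nat -> nat) := forall k, (phi k < phi (S k))%nat.

Lemma strict_mono phi : strict phi -> forall k m, (k <= m)%nat -> (phi k <= phi m)%nat.
Proof. intros H k m Hkm. induction Hkm; auto. specialize (H m). lia. Qed.

Lemma strict_ge phi : strict phi -> forall k, (k <= phi k)%nat.
Proof. intros H k. induction k; [lia|]. specialize (H k). lia. Qed.

Lemma strict_comp phi psi : strict phi -> strict psi -> strict (fun k => phi (psi k)).
Proof. intros H1 H2 k. pose proof (H2 k). 
 assert (phi (S (psi k)) <= phi (psi (S k)))%nat by (apply strict_mono; auto).
 specialize (H1 (psi k)). lia. Qed.

Lemma cv_subseq u l phi : Un_cv u l -> strict phi -> Un_cv (fun k => u (phi k)) l.
Proof. intros H Hp e He. destruct (H e He) as [N HN]. exists N. intros k Hk. apply HN.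
 pose proof (strict_ge phi Hp k). lia. Qed.

Lemma inv_small eps : 0 < eps -> exists N, forall k, (N <= k)%nat -> / INR (S k) < eps.
Proof. intros He. destruct (archimed_cor1 eps He) as [N [HN HN0]].
 exists N. intros k Hk. eapply Rle_lt_trans; [|apply HN].
 apply Rinv_le_contravar. apply lt_0_INR; auto. apply le_INR. lia. Qed.

Lemma inv_pos k : 0 < / INR (S k).
Proof. apply Rinv_0_lt_compat. apply lt_0_INR. lia. Qed.

Fixpoint iter_sub (g : R * nat -> nat) (k : nat) : nat :=
  match k with
  | O => g (/ INR 1, O)
  | S k' => g (/ INR (S (S k')), S (iter_sub g k'))
  end.

Lemma extract (Q : R -> nat -> Prop) :
  (forall e N, 0 < e -> exists k, (N <= k)%nat /\ Q e k) ->
  exists phi, strict phi /\ forall k, Q (/ INR (S k)) (phi k).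
Proof. intros H.
 assert (H' : forall p : R * nat, exists k, 0 < fst p -> (snd p <= k)%nat /\ Q (fst p) k).
 { intros [e N]. simpl. destruct (Rlt_dec 0 e) as [He|He].
   - destruct (H e N He) as [k Hk]. exists k. auto.
   - exists O. intros; lra. }
 set (g := fun p => proj1_sig (constructive_indefinite_description _ (H' p))).
 assert (Hg : forall p, 0 < fst p -> (snd p <= g p)%nat /\ Q (fst p) (g p)).
 { intros p. unfold g. destruct (constructive_indefinite_description _ (H' p)). simpl. auto. }
 exists (iter_sub g). split.
 - intros k. change (iter_sub g (S k)) with (g (/ INR (S (S k)), S (iter_sub g k))).
   destruct (Hg (/ INR (S (S k)), S (iter_sub g k))) as [H1 _]. apply inv_pos. cbn [fst snd] in H1. lia.
 - intros [|k].
   + change (iter_sub g 0) with (g (/ INR 1, O)). apply (Hg (/ INR 1, O)). apply (inv_pos O).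
   + change (iter_sub g (S k)) with (g (/ INR (S (S k)), S (iter_sub g k))).
     apply (Hg (/ INR (S (S k)), S (iter_sub g k))). apply inv_pos. Qed.

Lemma BW1 (u : nat -> R) M : (forall k, Rabs (u k) <= M) ->
  exists c phi, strict phi /\ Un_cv (fun k => u (phi k)) c.
Proof. intros HM.
 destruct (Bolzano_Weierstrass u (fun c => -M <= c <= M) (compact_P3 (-M) M)) as [c Hc].
 { intros k. specialize (HM k). unfold Rabs in HM. destruct (Rcase_abs (u k)); lra. }
 destruct (extract (fun e k => Rabs (u k - c) < e)) as [phi [Hphi HQ]].
 { intros e N He. destruct (Hc (disc c (mkposreal e He)) N) as [p [Hp1 Hp2]].
   - exists (mkposreal e He). intros x Hx. auto.
   - exists p. split; auto. }
 exists c, phi. split; auto. intros e He. destruct (inv_small e He) as [N HN]. exists N.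
 intros k Hk. unfold Rdist. specialize (HQ k). specialize (HN k Hk). lra. Qed.

Lemma BWn n (u : nat -> vec) M : (forall k i, (i < n)%nat -> Rabs (u k i) <= M) ->
  exists v phi, strict phi /\ forall i, (i < n)%nat -> Un_cv (fun k => u (phi k) i) (v i).
Proof. induction n; intros HM.
 - exists (fun _ => 0), (fun k => k). split. intros k; lia. intros; lia.
 - destruct IHn as [v [phi [Hphi Hcv]]]. intros; apply HM; lia.
   destruct (BW1 (fun k => u (phi k) n) M) as [c [psi [Hpsi Hc]]]. intros; apply HM; lia.
   exists (fun i => if Nat.eqb i n then c else v i), (fun k => phi (psi k)). split.
   + apply strict_comp; auto.
   + intros i Hi. destruct (Nat.eqb_spec i n).
     * subst. auto.
     * apply (cv_subseq (fun k => u (phi k) i)). apply Hcv. lia. auto. Qed.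

Lemma BWP n (u : nat -> vec) M (P : nat -> Prop) :
  (forall k i, (i < n)%nat -> Rabs (u k i) <= M) ->
  (forall N, exists k, (N <= k)%nat /\ P k) ->
  exists v phi, strict phi /\ (forall k, P (phi k)) /\ vcv n (fun k => u (phi k)) v.
Proof. intros HM HP.
 destruct (extract (fun _ k => P k)) as [phi0 [H0 HP0]]. intros e N _. apply HP.
 destruct (BWn n (fun k => u (phi0 k)) M) as [v [psi [Hpsi Hcv]]]. intros; apply HM; auto.
 exists v, (fun k => phi0 (psi k)). split; [apply strict_comp; auto|]. split; auto.
 apply vcv_comp. auto. Qed.

Lemma cluster_of_sub n u v phi : strict phi -> vcv n (fun k => u (phi k)) v -> cluster n u v.
Proof. intros Hp Hv e He N. destruct (Hv e He) as [M HM]. exists (phi (max N M)). split.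
 pose proof (strict_ge phi Hp (max N M)). lia. apply HM. lia. Qed.

Lemma sub_of_cluster n u v : cluster n u v -> exists phi, strict phi /\ vcv n (fun k => u (phi k)) v.
Proof. intros Hc. destruct (extract (fun e k => dist n (u k) v < e)) as [phi [Hp HQ]].
 { intros e N He. destruct (Hc e He N) as [k Hk]. exists k. auto. }
 exists phi. split; auto. intros e He. destruct (inv_small e He) as [N HN]. exists N.
 intros k Hk. specialize (HQ k). specialize (HN k Hk). lra. Qed.

Lemma dir_other al l i j s : s <> i -> s <> j -> dir al l i j s = 0.
Proof. intros. unfold dir. destruct (Nat.eqb_spec s i); [lia|]. destruct (Nat.eqb_spec s j); [lia|]. auto. Qed.
Lemma dir_i al l i j : dir al l i j i = - / al l i.
Proof. unfold dir. rewrite Nat.eqb_refl. auto. Qed.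
Lemma dir_j al l i j : i <> j -> dir al l i j j = / al l j.
Proof. intros. unfold dir. destruct (Nat.eqb_spec j i); [lia|]. rewrite Nat.eqb_refl. auto. Qed.

Lemma dot_dir n al l i j v : (i < n)%nat -> (j < n)%nat -> i <> j ->
  dot n v (dir al l i j) = - (v i / al l i) + v j / al l j.
Proof. intros Hi Hj Hij. unfold dot. rewrite (sumR_two n _ i j) by (auto; intros; rewrite dir_other by auto; ring).
 rewrite dir_i, dir_j by auto. unfold Rdiv. ring. Qed.

Lemma dot_vadd_scal n a x t d : dot n a (vadd x (vscal t d)) = dot n a x + t * dot n a d.
Proof. unfold dot, vadd, vscal. rewrite (sumR_ext n _ (fun i => a i * x i + t * (a i * d i))) by (intros; ring).
 rewrite sumR_plus, sumR_scal. auto. Qed.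

Lemma pow_01 th m : 0 < th < 1 -> 0 < th ^ m <= 1.
Proof. intros Ht. induction m; simpl; [lra|]. nra. Qed.

Lemma eligible_neq n lol hil al gf dlt eps l x i j :
  0 < dlt l -> eligible n lol hil al gf dlt eps l x i j -> i <> j.
Proof. intros Hd [_ [_ H]] ->. lra. Qed.

Lemma gam_ge n lol hil al gf dlt eps l x i j :
  (forall i, (i < n)%nat -> 0 < al l i) ->
  eligible n lol hil al gf dlt eps l x i j -> eps l <= gam lol hil al l x i j.
Proof. intros Hal [[Hi H1] [[Hj H2] _]]. unfold gam. apply Rmin_glb.
 - pose proof (Hal i Hi). apply Rmult_le_reg_r with (/ al l i). apply Rinv_0_lt_compat; auto.
   replace (al l i * (x i - lol l i) * / al l i) with (x i - lol l i) by (field; lra). unfold Rdiv in H1. lra.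
 - pose proof (Hal j Hj). apply Rmult_le_reg_r with (/ al l j). apply Rinv_0_lt_compat; auto.
   replace (al l j * (hil l j - x j) * / al l j) with (hil l j - x j) by (field; lra). unfold Rdiv in H2. lra. Qed.

Lemma line_feas n lol hil al betal gf dlt eps l x i j t :
  (forall i, (i < n)%nat -> 0 < al l i) -> 0 < dlt l ->
  feas n (lol l) (hil l) (al l) (betal l) x ->
  eligible n lol hil al gf dlt eps l x i j -> 0 <= t <= gam lol hil al l x i j ->
  feas n (lol l) (hil l) (al l) (betal l) (vadd x (vscal t (dir al l i j))).
Proof. intros Hal Hd [Hbox Hdot] Hel Ht.
 pose proof (eligible_neq _ _ _ _ _ _ _ _ _ _ _ Hd Hel) as Hij.
 destruct Hel as [[Hi _] [[Hj _] _]]. split.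
 - intros s Hs. unfold vadd, vscal. destruct (Hbox s Hs) as [B1 B2].
   destruct (Nat.eq_dec s i) as [->|Hsi].
   + rewrite dir_i. pose proof (Hal i Hi). assert (t <= al l i * (x i - lol l i)) by (unfold gam in Ht; pose proof (Rmin_l (al l i * (x i - lol l i)) (al l j * (hil l j - x j))); lra).
     assert (t * / al l i <= x i - lol l i).
     { apply Rmult_le_reg_r with (al l i); auto. rewrite Rmult_assoc, Rinv_l by lra. nra. }
     assert (0 <= t * / al l i) by (apply Rmult_le_pos; [lra|left; apply Rinv_0_lt_compat; auto]). lra.
   + destruct (Nat.eq_dec s j) as [->|Hsj].
     * rewrite dir_j by auto. pose proof (Hal j Hj). assert (t <= al l j * (hil l j - x j)) by (unfold gam in Ht; pose proof (Rmin_r (al l i * (x i - lol l i)) (al l j * (hil l j - x j))); lra).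
       assert (t * / al l j <= hil l j - x j).
       { apply Rmult_le_reg_r with (al l j); auto. rewrite Rmult_assoc, Rinv_l by lra. nra. }
       assert (0 <= t * / al l j) by (apply Rmult_le_pos; [lra|left; apply Rinv_0_lt_compat; auto]). lra.
     * rewrite dir_other by auto. lra.
 - rewrite dot_vadd_scal, dot_dir by auto. rewrite Hdot.
   pose proof (Hal i Hi). pose proof (Hal j Hj). field_simplify; lra. Qed.

Lemma step_feas n lol hil al betal fl gf sigma theta dlt eps l x x' :
  (forall i, (i < n)%nat -> 0 < al l i) -> 0 < dlt l -> 0 < theta < 1 ->
  feas n (lol l) (hil l) (al l) (betal l) x ->
  bcv_step n lol hil al fl gf sigma theta dlt eps l x x' ->
  feas n (lol l) (hil l) (al l) (betal l) x'.
Proof. intros Hal Hd Ht Hx [i [j [Hel [m [_ [_ ->]]]]]].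
 eapply line_feas; eauto. pose proof (pow_01 theta m Ht). pose proof (gam_ge _ _ _ _ _ _ _ _ _ _ _ Hal Hel).
 (* eps positivity not needed: gam >= eps but eps may be anything; need gam >= 0 *)
 destruct Hel as [[Hi H1] [[Hj H2] _]].
 assert (0 <= gam lol hil al l x i j).
 { destruct Hx as [Hb _]. unfold gam. apply Rmin_glb.
   - destruct (Hb i Hi). pose proof (Hal i Hi). nra.
   - destruct (Hb j Hj). pose proof (Hal j Hj). nra. }
 split; nra. Qed.

Lemma rt_feas n lol hil al betal fl gf sigma theta dlt eps l x x' :
  (forall i, (i < n)%nat -> 0 < al l i) -> 0 < dlt l -> 0 < theta < 1 ->
  feas n (lol l) (hil l) (al l) (betal l) x ->
  clos_refl_trans vec (bcv_step n lol hil al fl gf sigma theta dlt eps l) x x' ->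
  feas n (lol l) (hil l) (al l) (betal l) x'.
Proof. intros Hal Hd Ht Hx Hrt. induction Hrt; auto. eapply step_feas; eauto. Qed.

Lemma dot_g_dir n lol hil al gf dlt eps l x i j :
  0 < dlt l -> eligible n lol hil al gf dlt eps l x i j ->
  dot n (gf l x) (dir al l i j) <= - dlt l.
Proof. intros Hd Hel. pose proof (eligible_neq _ _ _ _ _ _ _ _ _ _ _ Hd Hel).
 destruct Hel as [[Hi _] [[Hj _] Hh]]. rewrite dot_dir by auto. unfold hq in Hh. lra. Qed.

Lemma norm_dir n al l i j :
  (forall i, (i < n)%nat -> 0 < al l i) -> (i < n)%nat -> (j < n)%nat -> i <> j ->
  norm n (dir al l i j) <= 2 * sumR n (fun s => / al l s).
Proof. intros Hal Hi Hj Hij. eapply Rle_trans. apply norm_le_N1.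
 rewrite (sumR_two n _ i j) by (auto; intros; rewrite dir_other by auto; apply Rabs_R0).
 rewrite dir_i, dir_j by auto.
 assert (Hp : forall s, (s < n)%nat -> 0 <= / al l s) by (intros; left; apply Rinv_0_lt_compat; auto).
 pose proof (sumR_term_le n (fun s => / al l s) i Hp Hi). pose proof (sumR_term_le n (fun s => / al l s) j Hp Hj).
 simpl in *. rewrite Rabs_Ropp, !Rabs_right by (apply Rle_ge; auto). lra. Qed.

Lemma least_nat (P : nat -> Prop) : (exists m, P m) -> exists m, P m /\ forall m', (m' < m)%nat -> ~ P m'.
Proof. intros [m Hm]. revert Hm. induction m as [m IH] using (well_founded_induction Wf_nat.lt_wf). intros Hm.
 destruct (classic (exists m', (m' < m)%nat /\ P m')) as [[m' [H1 H2]]|Hno].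
 - apply (IH m' H1 H2).
 - exists m. split; auto. intros m' H1 H2. apply Hno. eauto. Qed.

Lemma vadd_line x d s h : vadd (vadd x (vscal s d)) (vscal h d) = vadd x (vscal (s + h) d).
Proof. apply functional_extensionality. intros i. unfold vadd, vscal. ring. Qed.

Lemma dot_scal_r n g h d : dot n g (vscal h d) = h * dot n g d.
Proof. unfold dot, vscal. rewrite <- sumR_scal. apply sumR_ext. intros; ring. Qed.

Lemma deriv_line n F G x d s :
  frechet n F (vadd x (vscal s d)) (G (vadd x (vscal s d))) ->
  derivable_pt_lim (fun t => F (vadd x (vscal t d))) s (dot n (G (vadd x (vscal s d))) d).
Proof. intros Hf eps Heps. set (nd := norm n d). assert (Hnd : 0 <= nd) by apply norm_nonneg.
 set (K := nd + 1). assert (HK : 0 < K) by (unfold K; lra).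
 destruct (Hf (eps / (2 * K))) as [r [Hr H]]. apply Rdiv_lt_0_compat; lra.
 exists (mkposreal (r / K) (Rdiv_lt_0_compat _ _ Hr HK)). simpl. intros h Hh0 Hh.
 specialize (H (vscal h d)). rewrite norm_scal in H. fold nd in H. rewrite vadd_line in H.
 rewrite dot_scal_r in H.
 assert (Hab : Rabs h * nd < r).
 { apply Rle_lt_trans with (Rabs h * K). apply Rmult_le_compat_l. apply Rabs_pos. unfold K; lra.
   apply Rmult_lt_reg_r with (/ K). apply Rinv_0_lt_compat; auto. rewrite Rmult_assoc, Rinv_r by lra. rewrite Rmult_1_r. auto. }
 specialize (H Hab).
 set (A := F (vadd x (vscal (s + h) d)) - F (vadd x (vscal s d)) - h * dot n (G (vadd x (vscal s d))) d) in *.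
 replace ((F (vadd x (vscal (s + h) d)) - F (vadd x (vscal s d))) / h - dot n (G (vadd x (vscal s d))) d) with (A / h) by (unfold A; field; auto).
 unfold Rdiv. rewrite Rabs_mult, Rabs_inv.
 assert (Hah : 0 < Rabs h) by (apply Rabs_pos_lt; auto).
 apply Rmult_lt_reg_r with (Rabs h); auto. rewrite Rmult_assoc, Rinv_l by lra. rewrite Rmult_1_r.
 eapply Rle_lt_trans; [apply H|].
 assert (eps / (2 * K) * nd < eps).
 { assert (eps / (2*K) * nd < eps / (2*K) * (2*K)) by (apply Rmult_lt_compat_l; [apply Rdiv_lt_0_compat; lra | unfold K; lra]).
   replace (eps/(2*K)*(2*K)) with eps in H0 by (field; lra). auto. }
 nra. Qed.

Lemma vadd_sub x y : vadd x (vsub y x) = y.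
Proof. apply functional_extensionality. intros; unfold vadd, vsub; ring. Qed.

Lemma frechet_cont n F x g : frechet n F x g ->
  forall e, 0 < e -> exists r, 0 < r /\ forall y, dist n y x < r -> Rabs (F y - F x) < e.
Proof. intros Hf e He. destruct (Hf 1 Rlt_0_1) as [r1 [Hr1 H1]].
 set (ng := norm n g). assert (0 <= ng) by apply norm_nonneg.
 exists (Rmin r1 (e / (ng + 2))). split. apply Rmin_pos; auto. apply Rdiv_lt_0_compat; lra.
 intros y Hy. specialize (H1 (vsub y x)). rewrite vadd_sub in H1.
 unfold dist in Hy. set (nh := norm n (vsub y x)) in *. assert (0 <= nh) by apply norm_nonneg.
 assert (nh < r1) by (pose proof (Rmin_l r1 (e / (ng + 2))); lra).
 assert (nh < e / (ng + 2)) by (pose proof (Rmin_r r1 (e / (ng + 2))); lra).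
 specialize (H1 H2). pose proof (CS n g (vsub y x)). fold ng nh in H4.
 assert (nh * (ng + 2) < e).
 { apply Rmult_lt_reg_r with (/ (ng + 2)). apply Rinv_0_lt_compat; lra.
   rewrite Rmult_assoc, Rinv_r by lra. lra. }
 pose proof (Rabs_triang (F y - F x - dot n g (vsub y x)) (dot n g (vsub y x))).
 replace (F y - F x - dot n g (vsub y x) + dot n g (vsub y x)) with (F y - F x) in H6 by ring.
 pose proof (Rmult_le_pos _ _ H H0). nra. Qed.

Lemma cont_seq n F x (u : nat -> vec) :
  (forall e, 0 < e -> exists r, 0 < r /\ forall y, dist n y x < r -> Rabs (F y - F x) < e) ->
  vcv n u x -> Un_cv (fun k => F (u k)) (F x).
Proof. intros Hc Hu e He. destruct (Hc e He) as [r [Hr H]]. destruct (Hu r Hr) as [N HN].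
 exists N. intros k Hk. apply H. auto. Qed.

Lemma lip_cont n f x : loc_lipschitz n f x ->
  forall e, 0 < e -> exists r, 0 < r /\ forall y, dist n y x < r -> Rabs (f y - f x) < e.
Proof. intros [L [r [Hr H]]] e He. exists (Rmin r (e / (Rabs L + 1))). split.
 apply Rmin_pos; auto. apply Rdiv_lt_0_compat; auto. pose proof (Rabs_pos L); lra.
 intros y Hy. assert (dist n y x < r) by (pose proof (Rmin_l r (e / (Rabs L + 1))); lra).
 assert (dist n y x < e / (Rabs L + 1)) by (pose proof (Rmin_r r (e / (Rabs L + 1))); lra).
 specialize (H y x H0). rewrite dist_refl in H. specialize (H Hr).
 pose proof (dist_nonneg n y x). pose proof (Rabs_pos L). pose proof (Rle_abs L).
 assert (dist n y x * (Rabs L + 1) < e).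
 { apply Rmult_lt_reg_r with (/ (Rabs L + 1)). apply Rinv_0_lt_compat; lra.
   rewrite Rmult_assoc, Rinv_r by lra. lra. }
 nra. Qed.

Lemma armijo_exists n F x g d delta sigma theta gamma :
  frechet n F x g -> dot n g d <= - delta -> 0 < delta -> 0 < sigma < 1 -> 0 < theta < 1 -> 0 < gamma ->
  exists m, F (vadd x (vscal (theta ^ m * gamma) d)) <= F x + sigma * (theta ^ m * gamma) * dot n g d.
Proof. intros Hf Hgd Hd Hs Ht Hg. set (nd := norm n d). assert (Hnd : 0 <= nd) by apply norm_nonneg.
 destruct (Hf ((1 - sigma) * delta / (nd + 1))) as [r [Hr H]]. apply Rdiv_lt_0_compat; nra.
 destruct (pow_lt_1_zero theta ltac:(rewrite Rabs_right; lra) (r / (gamma * (nd + 1)))) as [M HM].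
 apply Rdiv_lt_0_compat; auto; nra.
 specialize (HM M (le_n M)). exists M. pose proof (pow_01 theta M Ht). rewrite Rabs_right in HM by lra.
 set (s := theta ^ M * gamma) in *. assert (Hs0 : 0 < s) by (unfold s; nra).
 assert (Hsr : s * (nd + 1) < r).
 { unfold s. apply Rmult_lt_reg_r with (/ (gamma * (nd + 1))). apply Rinv_0_lt_compat; nra.
   replace (theta ^ M * gamma * (nd + 1) * / (gamma * (nd + 1))) with (theta ^ M) by (field; lra). lra. }
 specialize (H (vscal s d)). rewrite norm_scal, Rabs_right in H by lra. fold nd in H.
 rewrite dot_scal_r in H. assert (s * nd < r) by nra. specialize (H H1).
 pose proof (Rle_abs (F (vadd x (vscal s d)) - F x - s * dot n g d)).
 assert ((1 - sigma) * delta / (nd + 1) * (s * nd) <= (1 - sigma) * delta * s).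
 { unfold Rdiv. replace ((1 - sigma) * delta * / (nd + 1) * (s * nd)) with ((1 - sigma) * delta * s * (nd / (nd + 1))) by (field; lra).
   assert (nd / (nd + 1) <= 1). { apply Rmult_le_reg_r with (nd + 1). lra. unfold Rdiv. rewrite Rmult_assoc, Rinv_l by lra. lra. }
   assert (0 <= (1 - sigma) * delta * s) by (apply Rmult_le_pos; nra). nra. }
 assert (0 <= (1 - sigma) * s * (- delta - dot n g d)) by (apply Rmult_le_pos; [nra|lra]). nra. Qed.

Lemma cv_le u w l1 l2 N : Un_cv u l1 -> Un_cv w l2 -> (forall k, (N <= k)%nat -> u k <= w k) -> l1 <= l2.
Proof. intros Hu Hw H. destruct (Rle_lt_dec l1 l2) as [|Hlt]; auto. exfalso.
 set (e := (l1 - l2) / 2). assert (He : 0 < e) by (unfold e; lra).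
 destruct (Hu e He) as [N1 H1]. destruct (Hw e He) as [N2 H2].
 set (k := max N (max N1 N2)). specialize (H1 k ltac:(unfold k; lia)). specialize (H2 k ltac:(unfold k; lia)).
 specialize (H k ltac:(unfold k; lia)). unfold Rdist in *. apply Rabs_def2 in H1. apply Rabs_def2 in H2.
 unfold e in *. lra. Qed.

Lemma cv_const c : Un_cv (fun _ => c) c.
Proof. intros e He. exists O. intros. unfold Rdist. rewrite Rminus_diag, Rabs_R0. auto. Qed.

Lemma box_bound n lo hi : exists M, forall x i, inbox n lo hi x -> (i < n)%nat -> Rabs (x i) <= M.
Proof. exists (sumR n (fun i => Rabs (lo i) + Rabs (hi i))). intros x i Hx Hi.
 pose proof (sumR_term_le n (fun i => Rabs (lo i) + Rabs (hi i)) i ltac:(intros; pose proof (Rabs_pos (lo i0)); pose proof (Rabs_pos (hi i0)); lra) Hi).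
 simpl in H. destruct (Hx i Hi). unfold Rabs in *.
 destruct (Rcase_abs (x i)), (Rcase_abs (lo i)), (Rcase_abs (hi i)); lra. Qed.

Lemma dot_cv n (a : nat -> vec) a0 (w : nat -> vec) v :
  (forall i, (i < n)%nat -> Un_cv (fun k => a k i) (a0 i)) ->
  (forall i, (i < n)%nat -> Un_cv (fun k => w k i) (v i)) ->
  Un_cv (fun k => dot n (a k) (w k)) (dot n a0 v).
Proof. intros Ha Hw. unfold dot. apply (sumR_cv n (fun k i => a k i * w k i)). intros i Hi.
 apply CV_mult; auto. Qed.

Lemma feas_lim n lo hi a beta (lo' hi' a' : nat -> vec) (b' : nat -> R) (w : nat -> vec) v :
  (forall i, (i < n)%nat -> Un_cv (fun k => lo' k i) (lo i) /\ Un_cv (fun k => hi' k i) (hi i) /\ Un_cv (fun k => a' k i) (a i)) ->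
  Un_cv b' beta ->
  (forall k, feas n (lo' k) (hi' k) (a' k) (b' k) (w k)) ->
  vcv n w v -> feas n lo hi a beta v.
Proof. intros Hc Hb Hw Hv. split.
 - intros i Hi. destruct (Hc i Hi) as [H1 [H2 _]]. pose proof (vcv_coord n w v i Hv Hi).
   split.
   + apply (cv_le _ _ _ _ O H1 H). intros k _. destruct (Hw k) as [Hbx _]. apply (Hbx i Hi).
   + apply (cv_le _ _ _ _ O H H2). intros k _. destruct (Hw k) as [Hbx _]. apply (Hbx i Hi).
 - assert (Un_cv (fun k => dot n (a' k) (w k)) (dot n a v)).
   { apply dot_cv. intros i Hi; apply Hc; auto. intros i Hi; apply (vcv_coord n); auto. }
   apply (UL_sequence (fun k => dot n (a' k) (w k))); auto.
   intros e He. destruct (Hb e He) as [N HN]. exists N. intros k Hk. destruct (Hw k) as [_ Hd]. rewrite Hd. auto. Qed.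

Lemma feas_closed n lo hi a beta (w : nat -> vec) v :
  (forall k, feas n lo hi a beta (w k)) -> vcv n w v -> feas n lo hi a beta v.
Proof. intros Hw Hv. apply (feas_lim n lo hi a beta (fun _ => lo) (fun _ => hi) (fun _ => a) (fun _ => beta) w v); auto.
 intros; repeat split; apply cv_const. apply cv_const. Qed.

Lemma proj_exists n lo hi a beta z : (exists x, feas n lo hi a beta x) ->
  exists p, is_proj n (feas n lo hi a beta) z p.
Proof. intros [x0 Hx0].
 set (E := fun r => exists x, feas n lo hi a beta x /\ r = - dist n z x).
 destruct (completeness E) as [m' [Hub Hlub]].
 { exists 0. intros r [x [_ ->]]. pose proof (dist_nonneg n z x). lra. }
 { exists (- dist n z x0). exists x0. auto. }
 set (m := - m').
 assert (Hlow : forall q, feas n lo hi a beta q -> m <= dist n z q).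
 { intros q Hq. assert (E (- dist n z q)) by (exists q; auto). specialize (Hub _ H). unfold m. lra. }
 assert (Happ : forall k : nat, exists x, feas n lo hi a beta x /\ dist n z x < m + / INR (S k)).
 { intros k. apply NNPP. intros Hno. assert (is_upper_bound E (- (m + / INR (S k)))).
   { intros r [x [Hx ->]]. destruct (Rle_lt_dec (- dist n z x) (- (m + / INR (S k)))); auto.
     exfalso. apply Hno. exists x. split; auto. lra. }
   specialize (Hlub _ H). pose proof (inv_pos k). unfold m in Hlub. lra. }
 set (xs := fun k => proj1_sig (constructive_indefinite_description _ (Happ k))).
 assert (Hxs : forall k, feas n lo hi a beta (xs k) /\ dist n z (xs k) < m + / INR (S k)).
 { intros k. unfold xs. destruct (constructive_indefinite_description _ (Happ k)). auto. }
 destruct (box_bound n lo hi) as [M HM].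
 destruct (BWP n xs M (fun _ => True)) as [v [phi [Hphi [_ Hcv]]]].
 { intros k i Hi. apply HM; auto. apply (Hxs k). }
 { intros N. exists N. auto. }
 assert (Hv : feas n lo hi a beta v) by (apply (feas_closed n lo hi a beta (fun k => xs (phi k))); auto; intros; apply Hxs).
 exists v. split; auto. intros q Hq. specialize (Hlow q Hq).
 assert (dist n z v <= m).
 { apply Rnot_lt_le. intros Hlt. set (e := (dist n z v - m) / 2). assert (He : 0 < e) by (unfold e; lra).
   destruct (Hcv e He) as [N1 H1]. destruct (inv_small e He) as [N2 H2].
   set (k := max N1 N2). specialize (H1 k ltac:(unfold k; lia)).
   specialize (H2 (phi k) ltac:(pose proof (strict_ge phi Hphi k); unfold k in *; lia)).
   destruct (Hxs (phi k)) as [_ H3]. pose proof (dist_tri n z (xs (phi k)) v). unfold e in *. lra. }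
 lra. Qed.

Lemma dot_sub_l n u v d : dot n u d - dot n v d = dot n (vsub u v) d.
Proof. unfold dot, vsub. rewrite <- sumR_minus. apply sumR_ext. intros; ring. Qed.

Lemma vadd_scal0 x d : vadd x (vscal 0 d) = x.
Proof. apply functional_extensionality. intros; unfold vadd, vscal; ring. Qed.

Lemma norm_vsub_line n x c d : norm n (vsub (vadd x (vscal c d)) x) = Rabs c * norm n d.
Proof. rewrite <- norm_scal. apply norm_ext. intros; unfold vsub, vadd, vscal; ring. Qed.

Lemma stop_or_step n lol hil al betal fl gf sigma theta dlt eps L x :
  (forall i, (i < n)%nat -> 0 < al L i /\ lol L i < hil L i) ->
  C1_near_box n (fl L) (gf L) (lol L) (hil L) ->
  0 < sigma < 1 -> 0 < theta < 1 -> 0 < dlt L -> 0 < eps L ->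
  feas n (lol L) (hil L) (al L) (betal L) x ->
  bcv_stop n lol hil al gf dlt eps L x \/ exists x', bcv_step n lol hil al fl gf sigma theta dlt eps L x x'.
Proof. intros Hal HC1 Hs Ht Hd He Hx.
 assert (Hal' : forall i, (i < n)%nat -> 0 < al L i) by (intros; apply Hal; auto).
 destruct (classic (exists i j, eligible n lol hil al gf dlt eps L x i j)) as [[i [j Hel]]|Hno].
 2:{ left. auto. }
 right. destruct HC1 as [r0 [Hr0 HC]].
 destruct (HC x x (proj1 Hx)) as [Hfr _]. rewrite dist_refl; auto.
 pose proof (gam_ge _ _ _ _ _ _ _ _ _ _ _ Hal' Hel).
 assert (Hgd : dot n (gf L x) (dir al L i j) <= - dlt L) by (eapply dot_g_dir; eauto).
 assert (Hg0 : 0 < gam lol hil al L x i j) by lra.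
 destruct (armijo_exists n (fl L) x (gf L x) (dir al L i j) (dlt L) sigma theta (gam lol hil al L x i j) Hfr Hgd Hd Hs Ht Hg0) as [m0 Hm0].
 destruct (least_nat (fun m => armijo n al fl gf sigma L x i j (theta ^ m * gam lol hil al L x i j))) as [m [Hm Hmin]].
 exists m0. unfold armijo. auto.
 eexists. exists i, j. split; auto. exists m. split; [auto|split;[auto|reflexivity]]. Qed.

Lemma no_inf_chain n lol hil al betal fl gf sigma theta dlt eps L x0 :
  (forall i, (i < n)%nat -> 0 < al L i /\ lol L i < hil L i) ->
  C1_near_box n (fl L) (gf L) (lol L) (hil L) ->
  0 < sigma < 1 -> 0 < theta < 1 -> 0 < dlt L -> 0 < eps L ->
  feas n (lol L) (hil L) (al L) (betal L) x0 ->
  ~ exists xs : nat -> vec, xs O = x0 /\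
      forall k, bcv_step n lol hil al fl gf sigma theta dlt eps L (xs k) (xs (S k)).
Proof. intros Hal HC1 Hs Ht Hd He Hx0 [xs [H0 Hst]].
 assert (Hal' : forall i, (i < n)%nat -> 0 < al L i) by (intros; apply Hal; auto).
 assert (Hfe : forall k, feas n (lol L) (hil L) (al L) (betal L) (xs k)).
 { induction k. rewrite H0; auto. exact (step_feas _ _ _ _ _ _ _ _ _ _ _ _ _ _ Hal' Hd Ht IHk (Hst k)). }
 destruct (box_bound n (lol L) (hil L)) as [M HM].
 destruct (BWP n xs M (fun _ => True)) as [xb [phi [Hphi [_ Hcv]]]].
 { intros k i Hi. apply HM; auto. apply (Hfe k). } { intros N. exists N. auto. }
 assert (Hxb : feas n (lol L) (hil L) (al L) (betal L) xb).
 { apply (feas_closed n _ _ _ _ (fun k => xs (phi k))); auto. }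
 destruct HC1 as [r0 [Hr0 HC]].
 destruct (HC xb xb (proj1 Hxb)) as [Hfr Hvc]. rewrite dist_refl; auto.
 set (F := fun k => fl L (xs k)).
 assert (Hdecr : forall k i j m, eligible n lol hil al gf dlt eps L (xs k) i j ->
    armijo n al fl gf sigma L (xs k) i j (theta ^ m * gam lol hil al L (xs k) i j) ->
    xs (S k) = vadd (xs k) (vscal (theta ^ m * gam lol hil al L (xs k) i j) (dir al L i j)) ->
    F (S k) <= F k - sigma * dlt L * (theta ^ m * gam lol hil al L (xs k) i j)).
 { intros k i j m Hel Harm Hx'. unfold F. rewrite Hx'. unfold armijo in Harm.
   pose proof (dot_g_dir _ _ _ _ _ _ _ _ _ _ _ Hd Hel). pose proof (gam_ge _ _ _ _ _ _ _ _ _ _ _ Hal' Hel).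
   pose proof (pow_01 theta m Ht).
   assert (0 <= sigma * (theta ^ m * gam lol hil al L (xs k) i j)) by (apply Rmult_le_pos; nra).
   nra. }
 assert (Hdec1 : Un_decreasing F).
 { intros k. destruct (Hst k) as [i [j [Hel [m [Harm [_ Hx']]]]]].
   pose proof (Hdecr k i j m Hel Harm Hx'). pose proof (gam_ge _ _ _ _ _ _ _ _ _ _ _ Hal' Hel).
   pose proof (pow_01 theta m Ht). assert (0 <= sigma * dlt L * (theta ^ m * gam lol hil al L (xs k) i j)) by (apply Rmult_le_pos; nra). lra. }
 assert (Hmono : forall k m, (k <= m)%nat -> F m <= F k).
 { intros k m Hkm. induction Hkm. lra. pose proof (Hdec1 m). lra. }
 assert (Hcont : Un_cv (fun s => F (phi s)) (fl L xb)).
 { apply (cont_seq n (fl L) xb (fun s => xs (phi s))); auto. apply (frechet_cont n _ _ _ Hfr). }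
 assert (Hlb : forall k, fl L xb <= F k).
 { intros k. apply (cv_le _ (fun _ => F k) _ _ k Hcont (cv_const _)). intros s Hs'.
   apply Hmono. pose proof (strict_ge phi Hphi s). lia. }
 destruct (decreasing_cv F Hdec1) as [LF HLF].
 { exists (- fl L xb). intros x [i ->]. unfold opp_seq. specialize (Hlb i). lra. }
 assert (Hdiff : forall eta, 0 < eta -> exists N, forall k, (N <= k)%nat -> F k - F (S k) < eta).
 { intros eta Heta. destruct (HLF (eta / 2)) as [N HN]. lra. exists N. intros k Hk.
   pose proof (HN k Hk). pose proof (HN (S k) ltac:(lia)). unfold Rdist in *.
   apply Rabs_def2 in H. apply Rabs_def2 in H1. lra. }
 set (K := sumR n (fun s => / al L s)).
 assert (HK : 0 <= K) by (apply sumR_nonneg; intros; left; apply Rinv_0_lt_compat; auto).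
 set (e0 := (1 - sigma) * dlt L / (4 * K + 1)).
 assert (He0 : 0 < e0) by (unfold e0; apply Rdiv_lt_0_compat; nra).
 assert (He0' : 4 * K * e0 < (1 - sigma) * dlt L).
 { unfold e0. unfold Rdiv. replace (4 * K * ((1 - sigma) * dlt L * / (4 * K + 1))) with ((1 - sigma) * dlt L * (4 * K / (4 * K + 1))) by (field; lra).
   assert (4 * K / (4 * K + 1) < 1). { apply Rmult_lt_reg_r with (4 * K + 1). lra. unfold Rdiv. rewrite Rmult_assoc, Rinv_l by lra. lra. }
   assert (0 < (1 - sigma) * dlt L) by nra. nra. }
 destruct (Hvc e0 He0) as [r1 [Hr1 Hr1']].
 set (lamb := Rmin (theta * eps L) (theta * r1 / (4 * K + 1))).
 assert (Hlamb : 0 < lamb) by (unfold lamb; apply Rmin_pos; [nra|apply Rdiv_lt_0_compat; nra]).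
 destruct (Hdiff (sigma * dlt L * lamb)) as [N1 HN1]. apply Rmult_lt_0_compat; [nra|auto].
 destruct (Hcv (r1 / 2)) as [N2 HN2]. lra.
 set (s := max N1 N2). set (k := phi s).
 assert (Hk1 : (N1 <= k)%nat) by (pose proof (strict_ge phi Hphi s); unfold k, s in *; lia).
 specialize (HN1 k Hk1). specialize (HN2 s ltac:(unfold s; lia)). fold k in HN2.
 destruct (Hst k) as [i [j [Hel [m [Harm [Hmin Hx']]]]]].
 pose proof (Hdecr k i j m Hel Harm Hx') as Hdk.
 pose proof (gam_ge _ _ _ _ _ _ _ _ _ _ _ Hal' Hel) as Hg.
 pose proof (eligible_neq _ _ _ _ _ _ _ _ _ _ _ Hd Hel) as Hij.
 set (x := xs k) in *. set (g := gam lol hil al L x i j) in *. set (d := dir al L i j) in *.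
 assert (Hlam : theta ^ m * g < lamb).
 { assert (sigma * dlt L * (theta ^ m * g) < sigma * dlt L * lamb) by lra.
   apply Rmult_lt_reg_l with (sigma * dlt L); auto. nra. }
 assert (Hl1 : lamb <= theta * eps L) by apply Rmin_l.
 assert (Hl2 : lamb <= theta * r1 / (4 * K + 1)) by apply Rmin_r.
 destruct m as [|m'].
 { simpl in Hlam. nra. }
 set (t := theta ^ m' * g).
 assert (Hlt : theta * t < lamb) by (unfold t; simpl in Hlam; lra).
 pose proof (pow_01 theta m' Ht). assert (Ht0 : 0 < t) by (unfold t; nra).
 assert (Htg : t <= g) by (unfold t; nra).
 assert (Hnarm := Hmin m' (Nat.lt_succ_diag_r m')). unfold armijo in Hnarm. fold x g d t in Hnarm.
 apply Rnot_le_lt in Hnarm.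

 assert (Hder : forall c, 0 <= c <= t -> derivable_pt_lim (fun c => fl L (vadd x (vscal c d))) c (dot n (gf L (vadd x (vscal c d))) d)).
 { intros c Hc. apply deriv_line.
   assert (Hf := line_feas n lol hil al betal gf dlt eps L x i j c Hal' Hd (Hfe k) Hel (conj (proj1 Hc) (Rle_trans _ _ _ (proj2 Hc) Htg))).
   destruct (HC _ (vadd x (vscal c d)) (proj1 Hf)) as [Hf1 _]. rewrite dist_refl; auto. auto. }
 destruct (MVT_cor2 _ _ 0 t Ht0 Hder) as [c [Hmvt Hc]].
 rewrite vadd_scal0 in Hmvt.
 set (y := vadd x (vscal c d)) in *.
 pose proof (dot_g_dir _ _ _ _ _ _ _ _ _ _ _ Hd Hel) as Hgd. fold x d in Hgd.
 assert (Hineq : sigma * dot n (gf L x) d < dot n (gf L y) d).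
 { apply Rmult_lt_reg_r with t; auto. replace (t - 0) with t in Hmvt by ring. nra. }
 assert (Hgap : (1 - sigma) * dlt L < dot n (vsub (gf L y) (gf L x)) d).
 { rewrite <- dot_sub_l. nra. }
 destruct Hel as [[Hi _] [[Hj _] _]].
 pose proof (CS n (vsub (gf L y) (gf L x)) d) as Hcs.
 pose proof (norm_dir n al L i j Hal' Hi Hj Hij) as Hnd. fold d K in Hnd.
 assert (Hdy : dist n y x <= t * (2 * K)).
 { unfold dist, y. rewrite norm_vsub_line. rewrite Rabs_right by lra. pose proof (norm_nonneg n d). nra. }
 assert (Ht2 : t * (2 * K) < r1 / 2).
 { assert (t < r1 / (4 * K + 1)).
   { apply Rmult_lt_reg_l with theta. lra. unfold Rdiv in *. lra. }
   assert (r1 / (4 * K + 1) * (2 * K) <= r1 / 2).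
   { unfold Rdiv. replace (r1 * / (4 * K + 1) * (2 * K)) with (r1 * (2 * K) / (4 * K + 1)) by (field; lra).
     apply Rmult_le_reg_r with (4 * K + 1). lra. unfold Rdiv. rewrite Rmult_assoc, Rinv_l by lra. nra. }
   nra. }
 assert (Hxy : dist n y xb < r1) by (pose proof (dist_tri n y x xb); lra).
 assert (Hxx : dist n x xb < r1) by lra.
 pose proof (Hr1' y Hxy) as G1. pose proof (Hr1' x Hxx) as G2.
 assert (Hnv : norm n (vsub (gf L y) (gf L x)) < 2 * e0).
 { change (norm n (vsub (gf L y) (gf L x))) with (dist n (gf L y) (gf L x)).
   pose proof (dist_tri n (gf L y) (gf L xb) (gf L x)) as Htri. rewrite (dist_sym n (gf L xb)) in Htri. lra. }
 pose proof (Rle_abs (dot n (vsub (gf L y) (gf L x)) d)).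
 pose proof (norm_nonneg n (vsub (gf L y) (gf L x))). pose proof (norm_nonneg n d).
 assert (norm n (vsub (gf L y) (gf L x)) * norm n d <= 2 * e0 * (2 * K)) by (apply Rmult_le_compat; lra).
 nra. Qed.

Lemma Rdiv_le_0_compat a b : 0 <= a -> 0 < b -> 0 <= a / b.
Proof. intros. unfold Rdiv. apply Rmult_le_pos; auto. left; apply Rinv_0_lt_compat; auto. Qed.

Lemma cv_inv v b : Un_cv v b -> b <> 0 -> Un_cv (fun k => / v k) (/ b).
Proof. intros Hv Hb. apply (continuity_seq (fun x => / x) v b); auto.
 apply (continuity_pt_inv (fun x => x) b). apply derivable_continuous_pt, derivable_pt_id. auto. Qed.

Lemma cv_bound u c : Un_cv u c -> exists B, forall k, Rabs (u k) <= B.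
Proof. intros H. destruct (maj_by_pos u (exist _ c H)) as [B [_ HB]]. eauto. Qed.

Lemma cv_evt_lt u v a b : Un_cv u a -> Un_cv v b -> a < b -> exists N, forall k, (N <= k)%nat -> u k < v k.
Proof. intros Hu Hv Hab. destruct (Hu ((b - a)/2)) as [N1 H1]. lra. destruct (Hv ((b - a)/2)) as [N2 H2]. lra.
 exists (max N1 N2). intros k Hk. specialize (H1 k ltac:(lia)). specialize (H2 k ltac:(lia)).
 unfold Rdist in *. apply Rabs_def2 in H1. apply Rabs_def2 in H2. lra. Qed.

Lemma cv_by_bound u x v : (forall k, Rabs (u k - x) <= v k) -> Un_cv v 0 -> Un_cv u x.
Proof. intros H Hv e He. destruct (Hv e He) as [N HN]. exists N. intros k Hk. specialize (HN k Hk).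
 unfold Rdist in *. rewrite Rminus_0_r in HN. specialize (H k). pose proof (Rle_abs (v k)). lra. Qed.

Definition clampv (lo hi x : vec) : vec := fun i => Rmax (lo i) (Rmin (hi i) (x i)).

Lemma clamp_box lo hi x i : lo i <= hi i -> lo i <= clampv lo hi x i <= hi i.
Proof. intros H. unfold clampv, Rmax, Rmin. destruct (Rle_dec (hi i) (x i)), (Rle_dec (lo i) _); lra. Qed.

Lemma clamp_close lo hi x lo' hi' i : lo i <= x i <= hi i ->
  Rabs (clampv lo' hi' x i - x i) <= Rabs (lo' i - lo i) + Rabs (hi' i - hi i).
Proof. intros H. unfold clampv, Rmax, Rmin. pose proof (Rabs_pos (lo' i - lo i)). pose proof (Rabs_pos (hi' i - hi i)).
 destruct (Rle_dec (hi' i) (x i)) as [K1|K1]; destruct (Rle_dec (lo' i) _) as [K2|K2];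
 unfold Rabs; repeat destruct Rcase_abs; lra. Qed.

Definition approx (n : nat) (lo hi a : vec) (b : R) (x : vec) : vec :=
  let c := clampv lo hi x in
  let eta := dot n a c - b in
  if Rle_dec 0 eta then
    let D := dot n a c - dot n a lo in
    vadd c (vscal (if Rlt_dec 0 D then eta / D else 0) (vsub lo c))
  else
    let D := dot n a hi - dot n a c in
    vadd c (vscal (if Rlt_dec 0 D then - eta / D else 0) (vsub hi c)).

Lemma dot_lin n a u v t : dot n a (vadd u (vscal t (vsub v u))) = dot n a u + t * (dot n a v - dot n a u).
Proof. unfold dot, vadd, vscal, vsub. rewrite <- sumR_minus, <- sumR_scal, <- sumR_plus. apply sumR_ext. intros; ring. Qed.

Lemma dot_mono n a u v : (forall i, (i < n)%nat -> 0 < a i /\ u i <= v i) -> dot n a u <= dot n a v.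
Proof. intros H. unfold dot. apply sumR_le. intros i Hi. destruct (H i Hi). nra. Qed.

Lemma approx_feas n lo hi a b x :
  (forall i, (i < n)%nat -> 0 < a i /\ lo i < hi i) -> (exists w, feas n lo hi a b w) ->
  feas n lo hi a b (approx n lo hi a b x).
Proof. intros Hal [w [Hwb Hwd]].
 set (c := clampv lo hi x).
 assert (Hc : forall i, (i < n)%nat -> lo i <= c i <= hi i) by (intros i Hi; apply clamp_box; destruct (Hal i Hi); lra).
 assert (Hlo : dot n a lo <= b) by (rewrite <- Hwd; apply dot_mono; intros i Hi; split; [apply Hal|apply Hwb]; auto).
 assert (Hhi : b <= dot n a hi) by (rewrite <- Hwd; apply dot_mono; intros i Hi; split; [apply Hal|apply Hwb]; auto).
 assert (Hconv : forall v t, (forall i, (i < n)%nat -> lo i <= v i <= hi i) -> 0 <= t <= 1 ->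
   inbox n lo hi (vadd c (vscal t (vsub v c)))).
 { intros v t Hv Ht i Hi. unfold vadd, vscal, vsub. specialize (Hv i Hi). specialize (Hc i Hi). split; nra. }
 unfold approx. fold c. set (eta := dot n a c - b).
 destruct (Rle_dec 0 eta) as [He|He].
 - set (D := dot n a c - dot n a lo). assert (HD : eta <= D) by (unfold eta, D; lra).
   destruct (Rlt_dec 0 D) as [HD0|HD0].
   + split. apply Hconv. intros i Hi; destruct (Hal i Hi); lra. split. apply Rdiv_le_0_compat; lra.
     apply Rmult_le_reg_r with D; auto. unfold Rdiv. rewrite Rmult_assoc, Rinv_l by lra. lra.
     rewrite dot_lin. replace (dot n a lo - dot n a c) with (- D) by (unfold D; ring). unfold eta. field. lra.
   + assert (eta = 0) by lra. split. apply Hconv. intros i Hi; destruct (Hal i Hi); lra. lra.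
     rewrite dot_lin. unfold eta in *. lra.
 - set (D := dot n a hi - dot n a c). assert (HD : - eta <= D) by (unfold eta, D; lra).
   destruct (Rlt_dec 0 D) as [HD0|HD0].
   + split. apply Hconv. intros i Hi; destruct (Hal i Hi); lra. split. apply Rdiv_le_0_compat; lra.
     apply Rmult_le_reg_r with D; auto. unfold Rdiv. rewrite Rmult_assoc, Rinv_l by lra. lra.
     rewrite dot_lin. fold D. unfold eta. field. lra.
   + exfalso. lra. Qed.

Lemma approx_close n lo hi a b x i :
  (forall i, (i < n)%nat -> 0 < a i /\ lo i < hi i) -> (i < n)%nat ->
  Rabs (approx n lo hi a b x i - clampv lo hi x i) <= Rabs (dot n a (clampv lo hi x) - b) / a i.
Proof. intros Hal Hi.
 set (c := clampv lo hi x).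
 assert (Hc : forall i, (i < n)%nat -> lo i <= c i <= hi i) by (intros j Hj; apply clamp_box; destruct (Hal j Hj); lra).
 destruct (Hal i Hi) as [Hai _].
 assert (Hq : 0 <= Rabs (dot n a c - b) / a i) by (apply Rdiv_le_0_compat; [apply Rabs_pos|auto]).
 unfold approx. fold c. set (eta := dot n a c - b).
 destruct (Rle_dec 0 eta) as [He|He].
 - set (D := dot n a c - dot n a lo). destruct (Rlt_dec 0 D) as [HD0|HD0].
   + unfold vadd, vscal, vsub. replace (c i + eta / D * (lo i - c i) - c i) with (- (eta / D * (c i - lo i))) by ring.
     rewrite Rabs_Ropp. rewrite Rabs_right by (apply Rle_ge, Rmult_le_pos; [apply Rdiv_le_0_compat; lra | destruct (Hc i Hi); lra]).
     rewrite Rabs_right by lra.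
     assert (Hterm : a i * (c i - lo i) <= D).
     { unfold D, dot. rewrite <- sumR_minus. replace (a i * (c i - lo i)) with (a i * c i - a i * lo i) by ring.
       apply (sumR_term_le n (fun s => a s * c s - a s * lo s) i); auto. intros s Hs. destruct (Hc s Hs). destruct (Hal s Hs). nra. }
     apply Rmult_le_reg_r with (a i * D). nra.
     replace (eta / D * (c i - lo i) * (a i * D)) with (eta * (a i * (c i - lo i))) by (field; lra).
     replace (eta / a i * (a i * D)) with (eta * D) by (field; lra). nra.
   + unfold vadd, vscal. rewrite Rmult_0_l, Rplus_0_r, Rminus_diag, Rabs_R0. auto.
 - set (D := dot n a hi - dot n a c). destruct (Rlt_dec 0 D) as [HD0|HD0].
   + unfold vadd, vscal, vsub. replace (c i + - eta / D * (hi i - c i) - c i) with ((- eta / D) * (hi i - c i)) by ring.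
     rewrite Rabs_right by (apply Rle_ge, Rmult_le_pos; [apply Rdiv_le_0_compat; lra | destruct (Hc i Hi); lra]).
     rewrite Rabs_left by lra.
     assert (Hterm : a i * (hi i - c i) <= D).
     { unfold D, dot. rewrite <- sumR_minus. replace (a i * (hi i - c i)) with (a i * hi i - a i * c i) by ring.
       apply (sumR_term_le n (fun s => a s * hi s - a s * c s) i); auto. intros s Hs. destruct (Hc s Hs). destruct (Hal s Hs). nra. }
     apply Rmult_le_reg_r with (a i * D). nra.
     replace (- eta / D * (hi i - c i) * (a i * D)) with (- eta * (a i * (hi i - c i))) by (field; lra).
     replace (- eta / a i * (a i * D)) with (- eta * D) by (field; lra). nra.
   + unfold vadd, vscal. rewrite Rmult_0_l, Rplus_0_r, Rminus_diag, Rabs_R0. auto. Qed.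

Lemma cv_abs0 u c : Un_cv u c -> Un_cv (fun k => Rabs (u k - c)) 0.
Proof. intros H e He. destruct (H e He) as [N HN]. exists N. intros k Hk. specialize (HN k Hk).
 unfold Rdist in *. rewrite Rminus_0_r, Rabs_Rabsolu. auto. Qed.

Lemma approx_seq n lo hi a beta (lol hil al : nat -> vec) betal x :
  (forall l i, (i < n)%nat -> 0 < al l i /\ lol l i < hil l i) ->
  (forall l, exists w, feas n (lol l) (hil l) (al l) (betal l) w) ->
  (forall i, (i < n)%nat -> 0 < a i) ->
  (forall i, (i < n)%nat ->
     Un_cv (fun l => lol l i) (lo i) /\ Un_cv (fun l => hil l i) (hi i) /\ Un_cv (fun l => al l i) (a i)) ->
  Un_cv betal beta -> feas n lo hi a beta x ->
  exists w : nat -> vec, (forall l, feas n (lol l) (hil l) (al l) (betal l) (w l)) /\ vcv n w x.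
Proof. intros Hal Hne Ha Hc Hb [Hxb Hxd].
 exists (fun l => approx n (lol l) (hil l) (al l) (betal l) x). split.
 { intros l. apply approx_feas; auto. }
 assert (Hcl : forall i, (i < n)%nat -> Un_cv (fun l => clampv (lol l) (hil l) x i) (x i)).
 { intros i Hi. destruct (Hc i Hi) as [H1 [H2 _]].
   apply cv_by_bound with (v := fun l => Rabs (lol l i - lo i) + Rabs (hil l i - hi i)).
   intros l. apply clamp_close. apply Hxb; auto.
   replace 0 with (0 + 0) by ring. apply CV_plus; apply cv_abs0; auto. }
 assert (Heta : Un_cv (fun l => dot n (al l) (clampv (lol l) (hil l) x) - betal l) 0).
 { replace 0 with (dot n a x - beta) by lra. apply CV_minus; auto.
   apply dot_cv. intros i Hi; apply Hc; auto. auto. }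
 apply vcv_comp. intros i Hi.
 apply cv_by_bound with (v := fun l => Rabs (dot n (al l) (clampv (lol l) (hil l) x) - betal l) / al l i
                                  + (Rabs (lol l i - lo i) + Rabs (hil l i - hi i))).
 - intros l. pose proof (approx_close n (lol l) (hil l) (al l) (betal l) x i (Hal l) Hi).
   pose proof (clamp_close lo hi x (lol l) (hil l) i (Hxb i Hi)).
   pose proof (Rabs_triang (approx n (lol l) (hil l) (al l) (betal l) x i - clampv (lol l) (hil l) x i) (clampv (lol l) (hil l) x i - x i)).
   replace (approx n (lol l) (hil l) (al l) (betal l) x i - clampv (lol l) (hil l) x i + (clampv (lol l) (hil l) x i - x i)) with (approx n (lol l) (hil l) (al l) (betal l) x i - x i) in H1 by ring.
   lra.
 - destruct (Hc i Hi) as [H1 [H2 H3]]. replace 0 with (0 * / a i + (0 + 0)) by ring.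
   apply CV_plus. unfold Rdiv. apply CV_mult.
   + pose proof (cv_abs0 _ _ Heta). rewrite (functional_extensionality _ (fun l => Rabs (dot n (al l) (clampv (lol l) (hil l) x) - betal l))) in H; auto.
     intros l. rewrite Rminus_0_r. auto.
   + apply cv_inv; auto. pose proof (Ha i Hi). lra.
   + apply CV_plus; apply cv_abs0; auto. Qed.

Lemma fin_max n (h : nat -> R) (P : nat -> Prop) :
  (forall i, (i < n)%nat -> ~ P i) \/
  exists i0, (i0 < n)%nat /\ P i0 /\ forall i, (i < n)%nat -> P i -> h i <= h i0.
Proof. induction n. left; intros; lia.
 destruct IHn as [Hno|[i0 [Hi0 [HP Hmax]]]].
 - destruct (classic (P n)) as [Hn|Hn].
   + right. exists n. split; [lia|split; auto]. intros i Hi HPi. destruct (Nat.eq_dec i n). subst; lra.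
     exfalso. apply (Hno i); auto; lia.
   + left. intros i Hi. destruct (Nat.eq_dec i n). subst; auto. apply Hno; lia.
 - destruct (classic (P n /\ h i0 <= h n)) as [[Hn Hle]|Hn].
   + right. exists n. split; [lia|split; auto]. intros i Hi HPi. destruct (Nat.eq_dec i n). subst; lra.
     pose proof (Hmax i ltac:(lia) HPi). lra.
   + right. exists i0. split; [lia|split; auto]. intros i Hi HPi. destruct (Nat.eq_dec i n).
     * subst. apply Rnot_lt_le. intros Hlt. apply Hn. split; auto; lra.
     * apply Hmax; auto; lia. Qed.

Lemma fin_min n (h : nat -> R) (P : nat -> Prop) :
  (forall i, (i < n)%nat -> ~ P i) \/
  exists i0, (i0 < n)%nat /\ P i0 /\ forall i, (i < n)%nat -> P i -> h i0 <= h i.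
Proof. destruct (fin_max n (fun i => - h i) P) as [H|[i0 [H1 [H2 H3]]]]; auto.
 right. exists i0. repeat split; auto. intros i Hi HP. specialize (H3 i Hi HP). lra. Qed.

Lemma kkt_vi n lo hi a beta g zb :
  (forall i, (i < n)%nat -> 0 < a i) -> feas n lo hi a beta zb ->
  (forall i j, (i < n)%nat -> (j < n)%nat -> lo i < zb i -> zb j < hi j -> g i / a i <= g j / a j) ->
  forall x, feas n lo hi a beta x -> 0 <= dot n g (vsub x zb).
Proof. intros Ha [Hzb Hzd] HK x [Hxb Hxd].
 set (h := fun i => g i / a i).
 assert (Hmu : exists mu, (forall i, (i < n)%nat -> lo i < zb i -> h i <= mu) /\ (forall j, (j < n)%nat -> zb j < hi j -> mu <= h j)).
 { destruct (fin_max n h (fun i => lo i < zb i)) as [HA|[i0 [Hi0 [HP Hmax]]]].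
   - destruct (fin_min n h (fun j => zb j < hi j)) as [HB|[j0 [Hj0 [HQ Hmin]]]].
     + exists 0. split; intros i Hi H; exfalso; [apply (HA i)|apply (HB i)]; auto.
     + exists (h j0). split. intros i Hi H; exfalso; apply (HA i); auto. auto.
   - exists (h i0). split; auto. intros j Hj Hq. apply HK; auto. }
 destruct Hmu as [mu [HA HB]].
 assert (Hsplit : dot n g (vsub x zb) = sumR n (fun i => a i * (h i - mu) * (x i - zb i)) + mu * (dot n a x - dot n a zb)).
 { unfold dot, vsub. rewrite <- sumR_minus, <- sumR_scal, <- sumR_plus. apply sumR_ext. intros i Hi.
   unfold h. field. pose proof (Ha i Hi). lra. }
 rewrite Hsplit, Hxd, Hzd, Rminus_diag, Rmult_0_r, Rplus_0_r.
 apply sumR_nonneg. intros i Hi. pose proof (Ha i Hi). destruct (Hzb i Hi). destruct (Hxb i Hi).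
 destruct (Rlt_dec mu (h i)) as [Hgt|Hle].
 - assert (zb i = lo i). { destruct (Rlt_dec (lo i) (zb i)) as [Hl|Hl]. pose proof (HA i Hi Hl). lra. lra. }
   assert (0 <= a i * (h i - mu)) by nra. nra.
 - destruct (Req_dec (h i) mu) as [He|Hne].
   + rewrite He. nra.
   + assert (zb i = hi i). { destruct (Rlt_dec (zb i) (hi i)) as [Hl|Hl]. pose proof (HB i Hi Hl). lra. lra. }
     assert (a i * (h i - mu) <= 0) by nra. nra. Qed.

Lemma unif_bound n (w : nat -> vec) :
  (forall i, (i < n)%nat -> exists B, forall l, Rabs (w l i) <= B) ->
  exists B, forall l i, (i < n)%nat -> Rabs (w l i) <= B.
Proof. induction n; intros H. exists 0. intros; lia.
 destruct IHn as [B1 H1]. intros; apply H; lia. destruct (H n ltac:(lia)) as [B2 H2].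
 exists (Rmax B1 B2). intros l i Hi. destruct (Nat.eq_dec i n). subst. eapply Rle_trans; [apply H2|apply Rmax_r].
 eapply Rle_trans; [apply H1; lia|apply Rmax_l]. Qed.

Theorem theorem4p1
  (n : nat) (lo hi a : vec) (beta : R) (f : vec -> R)
  (lol hil al : nat -> vec) (betal : nat -> R)
  (fl : nat -> vec -> R) (gf : nat -> vec -> vec)
  (z0 : vec) (sigma theta : R) (dlt eps : nat -> R) :
  (* (A1) *)
  (exists x, feas n lo hi a beta x) ->
  (forall i, (i < n)%nat -> 0 < a i) ->
  (forall x, inbox n lo hi x -> loc_lipschitz n f x) ->
  (* (A2) *)
  (forall l, exists x, feas n (lol l) (hil l) (al l) (betal l) x) ->
  (forall l i, (i < n)%nat -> 0 < al l i /\ lol l i < hil l i) ->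
  (forall i, (i < n)%nat ->
     Un_cv (fun l => lol l i) (lo i) /\ Un_cv (fun l => hil l i) (hi i) /\
     Un_cv (fun l => al l i) (a i)) ->
  Un_cv betal beta ->
  (* (A3) *)
  (forall l, C1_near_box n (fl l) (gf l) (lol l) (hil l)) ->
  (forall (y : nat -> vec) (ybar : vec),
     (forall l, feas n (lol l) (hil l) (al l) (betal l) (y l)) ->
     vcv n y ybar ->
     exists gbar, clarke_subdiff n f ybar gbar /\ vcv n (fun l => gf l (y l)) gbar) ->
  (* parameters of Method (BCV) *)
  feas n (lol O) (hil O) (al O) (betal O) z0 ->
  0 < sigma < 1 -> 0 < theta < 1 ->
  (forall l, 0 < dlt l) -> Un_decreasing dlt -> Un_cv dlt 0 ->
  (forall l, 0 < eps l) -> Un_decreasing eps -> Un_cv eps 0 ->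
  (* (i) every stage is well defined and finite *)
  (forall l z, bcv_gen n lol hil al betal fl gf sigma theta dlt eps z0 l z ->
     (exists x0, is_proj n (feas n (lol (S l)) (hil (S l)) (al (S l)) (betal (S l))) z x0) /\
     forall x0, is_proj n (feas n (lol (S l)) (hil (S l)) (al (S l)) (betal (S l))) z x0 ->
       (~ exists xs : nat -> vec, xs O = x0 /\
            forall k, bcv_step n lol hil al fl gf sigma theta dlt eps (S l) (xs k) (xs (S k))) /\
       (forall x, clos_refl_trans vec (bcv_step n lol hil al fl gf sigma theta dlt eps (S l)) x0 x ->
          bcv_stop n lol hil al gf dlt eps (S l) x \/
          exists x', bcv_step n lol hil al fl gf sigma theta dlt eps (S l) x x'))
  /\
  (forall z : nat -> vec, z O = z0 ->
     (forall l, bcv_stage n lol hil al betal fl gf sigma theta dlt eps (S l) (z l) (z (S l))) ->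
     (* (ii) *)
     (exists zbar, cluster n z zbar) /\
     (forall zbar, cluster n z zbar ->
        feas n lo hi a beta zbar /\
        exists gbar, clarke_subdiff n f zbar gbar /\
          forall x, feas n lo hi a beta x -> 0 <= dot n gbar (vsub x zbar)) /\
     (* (iii) *)
     (semiconvex_on n f lo hi ->
        (exists fstar, is_inf_on f (feas n lo hi a beta) fstar /\
                       Un_cv (fun l => f (z l)) fstar) /\
        (forall zbar, cluster n z zbar ->
           feas n lo hi a beta zbar /\
           forall x, feas n lo hi a beta x -> f zbar <= f x))).
Proof.
 intros HD Ha Hlip Hne Hal Hc Hb HC1 HA3 Hz0 Hs Ht Hdp Hdd Hdc Hep Hed Hec.
 split.
 { intros l z _. split.
   - apply proj_exists; auto.
   - intros x0 Hx0. assert (Hf0 := proj1 Hx0). split.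
     + apply (no_inf_chain n lol hil al betal); auto.
     + intros x Hrt. apply (stop_or_step n lol hil al betal); auto.
       apply (rt_feas n lol hil al betal fl gf sigma theta dlt eps (S l) x0 x); auto.
       intros; apply Hal; auto. }
 intros z Hz0' Hst.
 assert (Hzf : forall l, feas n (lol l) (hil l) (al l) (betal l) (z l)).
 { intros [|l]. rewrite Hz0'; auto. destruct (Hst l) as [x0 [Hp [Hrt _]]].
   apply (rt_feas n lol hil al betal fl gf sigma theta dlt eps (S l) x0); auto.
   intros; apply Hal; auto. apply Hp. }
 assert (Hstop : forall l, bcv_stop n lol hil al gf dlt eps (S l) (z (S l))).
 { intros l. destruct (Hst l) as [x0 [_ [_ H]]]. auto. }
 assert (Hbd : exists M, forall l i, (i < n)%nat -> Rabs (z l i) <= M).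
 { apply unif_bound. intros i Hi. destruct (Hc i Hi) as [H1 [H2 _]].
   destruct (cv_bound _ _ H1) as [B1 HB1]. destruct (cv_bound _ _ H2) as [B2 HB2].
   exists (B1 + B2). intros l. destruct (Hzf l) as [Hbx _]. destruct (Hbx i Hi).
   specialize (HB1 l). specialize (HB2 l). unfold Rabs in *. repeat destruct Rcase_abs; lra. }
 destruct Hbd as [M HM].
 assert (Hclfeas : forall zb, cluster n z zb -> feas n lo hi a beta zb).
 { intros zb Hcl. destruct (sub_of_cluster _ _ _ Hcl) as [phi [Hphi Hpc]].
   apply (feas_lim n lo hi a beta (fun k => lol (phi k)) (fun k => hil (phi k)) (fun k => al (phi k)) (fun k => betal (phi k)) (fun k => z (phi k))); auto.
   - intros i Hi. destruct (Hc i Hi) as [H1 [H2 H3]]. repeat split; apply (cv_subseq (fun l => _ l i)); auto.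
   - apply cv_subseq; auto. }
 assert (HVI : forall zb, cluster n z zb -> exists gb, clarke_subdiff n f zb gb /\
            forall x, feas n lo hi a beta x -> 0 <= dot n gb (vsub x zb)).
 { intros zb Hcl. pose proof (Hclfeas zb Hcl) as Hzb.
   destruct (sub_of_cluster _ _ _ Hcl) as [phi [Hphi Hpc]].
   destruct (approx_seq n lo hi a beta lol hil al betal zb) as [w [Hwf Hwc]]; auto.
   set (y := fun l => if excluded_middle_informative (exists s, phi s = l) then z l else w l).
   assert (Hyf : forall l, feas n (lol l) (hil l) (al l) (betal l) (y l)).
   { intros l. unfold y. destruct (excluded_middle_informative _); auto. }
   assert (Hyp : forall s, y (phi s) = z (phi s)).
   { intros s. unfold y. destruct (excluded_middle_informative _) as [_|Hn]; auto. exfalso; apply Hn; eauto. }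
   assert (Hyc : vcv n y zb).
   { intros e He. destruct (Hwc e He) as [N1 HN1]. destruct (Hpc e He) as [N2 HN2].
     exists (max N1 (phi N2)). intros l Hl. unfold y. destruct (excluded_middle_informative _) as [[s Hs']|_].
     - subst l. apply HN2. destruct (Compare_dec.le_lt_dec N2 s) as [|Hlt]; auto.
       assert (phi (S s) <= phi N2)%nat by (apply strict_mono; auto). specialize (Hphi s). lia.
     - apply HN1. lia. }
   destruct (HA3 y zb Hyf Hyc) as [gb [Hsub Hgc]].
   exists gb. split; auto. apply (kkt_vi n lo hi a beta gb zb); auto.
   intros i j Hi Hj Hli Hhj. apply Rnot_lt_le. intros Hlt.
   assert (Hgi : forall k, (k < n)%nat -> Un_cv (fun s => gf (phi s) (z (phi s)) k / al (phi s) k) (gb k / a k)).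
   { intros k Hk. unfold Rdiv. apply CV_mult.
     - pose proof (cv_subseq _ _ phi (vcv_coord n _ _ k Hgc Hk) Hphi) as H. simpl in H.
       intros e He. destruct (H e He) as [N HN]. exists N. intros s Hs'. rewrite <- Hyp. apply HN; auto.
     - apply cv_inv. apply (cv_subseq (fun l => al l k)); auto. apply Hc; auto. pose proof (Ha k Hk); lra. }
   assert (Hdphi : Un_cv (fun s => dlt (phi s)) 0) by (apply cv_subseq; auto).
   assert (Hephi : Un_cv (fun s => eps (phi s)) 0) by (apply cv_subseq; auto).
   destruct (cv_evt_lt (fun s => dlt (phi s)) (fun s => gf (phi s) (z (phi s)) i / al (phi s) i - gf (phi s) (z (phi s)) j / al (phi s) j) 0 (gb i / a i - gb j / a j)) as [N1 HN1]; auto.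
   { apply CV_minus; apply Hgi; auto. } { lra. }
   destruct (cv_evt_lt (fun s => lol (phi s) i + eps (phi s) / al (phi s) i) (fun s => z (phi s) i) (lo i + 0 * / a i) (zb i)) as [N2 HN2].
   { apply CV_plus. apply (cv_subseq (fun l => lol l i)); auto. apply Hc; auto. unfold Rdiv. apply CV_mult; auto.
     apply cv_inv. apply (cv_subseq (fun l => al l i)); auto. apply Hc; auto. pose proof (Ha i Hi); lra. }
   { apply (vcv_coord n (fun s => z (phi s))); auto. } { lra. }
   destruct (cv_evt_lt (fun s => z (phi s) j) (fun s => hil (phi s) j - eps (phi s) / al (phi s) j) (zb j) (hi j - 0 * / a j)) as [N3 HN3].
   { apply (vcv_coord n (fun s => z (phi s))); auto. }
   { apply CV_minus. apply (cv_subseq (fun l => hil l j)); auto. apply Hc; auto. unfold Rdiv. apply CV_mult; auto.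
     apply cv_inv. apply (cv_subseq (fun l => al l j)); auto. apply Hc; auto. pose proof (Ha j Hj); lra. }
   { lra. }
   set (s := S (max N1 (max N2 N3))).
   specialize (HN1 s ltac:(unfold s; lia)). specialize (HN2 s ltac:(unfold s; lia)). specialize (HN3 s ltac:(unfold s; lia)).
   assert (Hps : (1 <= phi s)%nat) by (pose proof (strict_ge phi Hphi s); unfold s in *; lia).
   destruct (phi s) as [|l'] eqn:Heq; [lia|].
   apply (Hstop l'). exists i, j. split; [|split].
   - split; auto. lra.
   - split; auto. lra.
   - unfold hq. lra. }
 split.
 { destruct (BWP n z M (fun _ => True)) as [v [phi [Hphi [_ Hv]]]]; auto. intros N; exists N; auto.
   exists v. apply (cluster_of_sub n z v phi); auto. }
 split; [intros zb Hcl; split; [apply Hclfeas; auto|apply HVI; auto]|].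
 intros Hsc.
 assert (Hmin : forall zb, cluster n z zb -> forall x, feas n lo hi a beta x -> f zb <= f x).
 { intros zb Hcl x Hx. destruct (HVI zb Hcl) as [gb [Hsub Hvi]].
   apply Hsc. apply (Hclfeas zb Hcl). apply Hx.
   intros e He r Hr. destruct (Hsub (vsub x zb) e He r Hr) as [y [t [H1 [H2 H3]]]].
   exists y, t. split; auto. split; auto. specialize (Hvi x Hx). lra. }
 destruct (BWP n z M (fun _ => True)) as [zb0 [phi0 [Hphi0 [_ Hv0]]]]; auto. intros N; exists N; auto.
 assert (Hcl0 : cluster n z zb0) by (apply (cluster_of_sub n z zb0 phi0); auto).
 pose proof (Hclfeas zb0 Hcl0) as Hzb0.
 split.
 - exists (f zb0). split.
   + split. apply Hmin; auto. intros e He. exists zb0. split; auto. lra.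
   + intros e He. apply NNPP. intros Hno.
     assert (HP : forall N, exists k, (N <= k)%nat /\ e <= Rabs (f (z k) - f zb0)).
     { intros N. apply NNPP. intros Hno2. apply Hno. exists N. intros k Hk. unfold Rdist.
       apply Rnot_le_lt. intros Hle. apply Hno2. eauto. }
     destruct (BWP n z M (fun k => e <= Rabs (f (z k) - f zb0))) as [v [psi [Hpsi [HPpsi Hv]]]]; auto.
     assert (Hclv : cluster n z v) by (apply (cluster_of_sub n z v psi); auto).
     pose proof (Hclfeas v Hclv) as Hvf.
     assert (Hfv : f v = f zb0) by (pose proof (Hmin v Hclv zb0 Hzb0); pose proof (Hmin zb0 Hcl0 v Hvf); lra).
     pose proof (cont_seq n f v (fun k => z (psi k)) (lip_cont n f v (Hlip v (proj1 Hvf))) Hv) as Hcv.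
     destruct (Hcv e He) as [N HN]. specialize (HN N (le_n N)). specialize (HPpsi N).
     unfold Rdist in HN. rewrite Hfv in HN. lra.
 - intros zb Hcl. split. apply Hclfeas; auto. apply Hmin; auto.
Qed.
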